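(* For every integer $n\ge 1$, the set \[U_n=\{t_it_{n+j}-t_jt_{n+i} : 1\le i<j\le n\}\] is a universal Gröbner basis of the toric ideal $I_{S_n}$, i.e. it is a Gröbner basis of $I_{S_n}$ with respect to every monomial order.
   Context: With $e_i\in\mathbb{R}^{n+1}$ the standard basis vectors, let $s_i=e_1+e_{i+1}+e_{n+1}$ for $1\le i<n$, $s_n=e_1+e_{n+1}$, $s_i=e_{i+1-n}+e_{n+1}$ for $n<i<2n$, $s_{2n}=e_{n+1}$ (the nonzero codewords of the homogeneous star code $S_n$). The toric ideal $I_{S_n}$ is the kernel of the ring homomorphism $\mathbb{C}[t_1,\dots,t_{2n}]\to\mathbb{C}[x_1,\dots,x_{n+1}]$, $t_i\mapsto x^{s_i}$, where $x^a=x_1^{a_1}\cdots x_{n+1}^{a_{n+1}}$. *)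

(* Defs.v *)
From mathcomp Require Import all_boot all_order all_algebra.
From mathcomp Require Import mpoly.
Set Implicit Arguments. Unset Strict Implicit. Unset Printing Implicit Defensive.
Import GRing.Theory.
Local Open Scope ring_scope.

(* A monomial order on the monomials 'X_{1..k} (exponent vectors):
   a total order, compatible with multiplication (addition of exponents),
   with 1 (exponent 0) the least element (hence a well-order by Dickson). *)
Definition monomial_order (k : nat) (le : rel 'X_{1..k}) : Prop :=
  [/\ reflexive le, antisymmetric le, transitive le & total le] /\
  (forall m, le 0%MM m) /\
  (forall m1 m2 u, le m1 m2 -> le (m1 + u)%MM (m2 + u)%MM).

Definition is_lead_mono (K : fieldType) (k : nat) (le : rel 'X_{1..k})
    (p : {mpoly K[k]}) (m : 'X_{1..k}) : bool :=
  (m \in msupp p) && all (fun m' => le m' m) (msupp p).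

Definition groebner_basis (K : fieldType) (k : nat) (le : rel 'X_{1..k})
    (I G : {mpoly K[k]} -> Prop) : Prop :=
  (forall g, G g -> I g) /\
  (forall f, I f -> f != 0 ->
     exists g, [/\ G g, g != 0 &
       exists mf mg, [/\ is_lead_mono le f mf, is_lead_mono le g mg &
                          (mg <= mf)%MM]]).

Definition universal_groebner_basis (K : fieldType) (k : nat)
    (I G : {mpoly K[k]} -> Prop) : Prop :=
  forall le : rel 'X_{1..k}, monomial_order le -> groebner_basis le I G.

(* e_i in R^{n+1}, 1-indexed: e i j = [i == j] *)
Definition e (i j : nat) : nat := (i == j).

(* s_i (1 <= i <= 2n) as an exponent function of the 1-indexed coordinate j *)
Definition s (n i j : nat) : nat :=
  (if i < n then e 1 j + e i.+1 j + e n.+1 j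
   else if i == n then e 1 j + e n.+1 j
   else if i < 2 * n then e (i.+1 - n) j + e n.+1 j
   else e n.+1 j)%N.

(* x^{s_i} in C[x_1,...,x_{n+1}]  (variable x_j is 'X_(j-1)) *)
Definition xs (K : fieldType) (n i : nat) : {mpoly K[n.+1]} :=
  'X_[[multinom s n i j.+1 | j < n.+1]].

(* t_a in C[t_1,...,t_{2n}]  (variable t_a is 'X_(a-1)), for 1 <= a <= 2n *)
Definition t (K : fieldType) (n a : nat) : {mpoly K[2 * n]} :=
  'X_[[multinom (j.+1 == a : nat) | j < 2 * n]].

Definition toric_map (K : fieldType) (n : nat) : (2 * n).-tuple {mpoly K[n.+1]} :=
  [tuple xs K n k.+1 | k < 2 * n].

Definition toric_ideal (K : fieldType) (n : nat) (p : {mpoly K[2 * n]}) : Prop :=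
  p \mPo toric_map K n = 0.

Definition U (K : fieldType) (n : nat) (g : {mpoly K[2 * n]}) : Prop :=
  exists i j : nat, [/\ (1 <= i)%N, (i < j)%N, (j <= n)%N &
    g = t K n i * t K n (n + j) - t K n j * t K n (n + i)].

(* Main.v *)
Require Import Defs.
From mathcomp Require Import all_boot all_order all_algebra.
From mathcomp Require Import mpoly.
From mathcomp Require Import zify.
Set Implicit Arguments. Unset Strict Implicit. Unset Printing Implicit Defensive.
Import GRing.Theory.
Local Open Scope ring_scope.

Definition nm {p} (m : 'X_{1..p}) (k : nat) : nat := nth 0%N (m : seq nat) k.

Lemma nm_def p (m : 'X_{1..p}) (i : 'I_p) : m i = nm m i.
Proof. by rewrite (mnm_nth 0%N). Qed.

Lemma nm_out p (m : 'X_{1..p}) k : (p <= k)%N -> nm m k = 0%N.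
Proof. by move=> h; rewrite /nm nth_default // size_tuple. Qed.

Lemma nmD p (m1 m2 : 'X_{1..p}) k : nm (m1 + m2)%MM k = (nm m1 k + nm m2 k)%N.
Proof.
case: (ltnP k p) => h; last by rewrite !nm_out.
by rewrite -[k]/(nat_of_ord (Ordinal h)) -!nm_def mnmDE.
Qed.

Lemma nmB p (m1 m2 : 'X_{1..p}) k : nm (m1 - m2)%MM k = (nm m1 k - nm m2 k)%N.
Proof.
case: (ltnP k p) => h; last by rewrite !nm_out.
by rewrite -[k]/(nat_of_ord (Ordinal h)) -!nm_def mnmBE.
Qed.

Lemma nmE p (E : nat -> nat) k :
  nm [multinom E (nat_of_ord i) | i < p] k = if (k < p)%N then E k else 0%N.
Proof.
case: (ltnP k p) => h; last by rewrite !nm_out.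
by rewrite -[k]/(nat_of_ord (Ordinal h)) -!nm_def mnmE.
Qed.

Lemma nm_eqP p (m1 m2 : 'X_{1..p}) :
  (forall k, (k < p)%N -> nm m1 k = nm m2 k) -> m1 = m2.
Proof. by move=> h; apply/mnmP => i; rewrite !nm_def h. Qed.

Lemma nm_leP p (m1 m2 : 'X_{1..p}) :
  (forall k, (k < p)%N -> (nm m1 k <= nm m2 k)%N) -> (m1 <= m2)%MM.
Proof. by move=> h; apply/mnm_lepP => i; rewrite !nm_def h. Qed.

Definition sv (n : nat) (i : 'I_(2 * n)) : 'X_{1..n.+1} :=
  [multinom s n i.+1 j.+1 | j < n.+1].

Lemma compX (K : fieldType) n (m : 'X_{1..2 * n}) :
  'X_[m] \mPo toric_map K n = 'X_[(\sum_(i < 2 * n) (sv i *+ m i))%MM].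
Proof.
rewrite comp_mpolyX.
rewrite -mprodXnE.
apply: eq_bigr => i _; by rewrite tnth_mktuple.
Qed.

Definition phi n (m : 'X_{1..2 * n}) : 'X_{1..n.+1} :=
  (\sum_(i < 2 * n) (sv i *+ m i))%MM.

Lemma nm_phi n (m : 'X_{1..2 * n}) k : (k < n.+1)%N ->
  nm (phi m) k = (\sum_(i < 2 * n) s n i.+1 k.+1 * m i)%N.
Proof.
move=> h; rewrite -[k]/(nat_of_ord (Ordinal h)) -nm_def /phi mnm_sumE.
by apply: eq_bigr => i _; rewrite mulmnE mnmE mulnC.
Qed.

Lemma split_nat n (G : nat -> nat) :
  (\sum_(0 <= i < 2 * n) G i = \sum_(0 <= c < n) G c + \sum_(0 <= c < n) G (c + n))%N.
Proof.
rewrite mul2n -addnn (@big_cat_nat _ _ _ n 0 (n + n)) ?leq_addr //=.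
by rewrite (big_addn 0 (n + n) n) addnK.
Qed.

Lemma split2 n (m : 'X_{1..2 * n}) (F : nat -> nat) :
  (\sum_(i < 2 * n) F i * m i = \sum_(0 <= c < n) F c * nm m c
      + \sum_(0 <= c < n) F (c + n) * nm m (c + n))%N.
Proof.
transitivity (\sum_(0 <= i < 2 * n) F i * nm m i)%N.
  by rewrite big_mkord; apply: eq_bigr => i _; rewrite nm_def.
exact: split_nat.
Qed.

Lemma sum_pick n c0 (f : nat -> nat) : (c0 < n)%N ->
  (\sum_(0 <= c < n) (c == c0) * f c = f c0)%N.
Proof.
move=> h; rewrite (bigD1_seq c0) ?mem_iota ?iota_uniq //=.
rewrite eqxx mul1n big1_seq ?addn0 //.
move=> c /andP[/negbTE -> _] //.
by rewrite add0n subn0.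
Qed.

Ltac sdec := rewrite /s /e; repeat (case: ifP => ?); repeat (case: eqP => ?); simpl; lia.

Lemma S0u n c : (0 < n)%N -> (c < n)%N -> s n c.+1 1 = 1%N.
Proof. move=> *; sdec. Qed.
Lemma S0v n c : (0 < n)%N -> (c < n)%N -> s n (c + n).+1 1 = 0%N.
Proof. move=> *; sdec. Qed.
Lemma Scu n c c0 : (c0.+1 < n)%N -> (c < n)%N -> s n c.+1 c0.+2 = (c == c0) :> nat.
Proof. move=> *; sdec. Qed.
Lemma Scv n c c0 : (c0.+1 < n)%N -> (c < n)%N -> s n (c + n).+1 c0.+2 = (c == c0) :> nat.
Proof. move=> *; sdec. Qed.
Lemma Snu n c : (0 < n)%N -> (c < n)%N -> s n c.+1 n.+1 = 1%N.
Proof. move=> *; sdec. Qed.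
Lemma Snv n c : (0 < n)%N -> (c < n)%N -> s n (c + n).+1 n.+1 = 1%N.
Proof. move=> *; sdec. Qed.
Definition Aa n i k : nat := if (i.+1 < n)%N then e i.+2 k else 0%N.

Lemma Su n i k : (i < n)%N -> s n i.+1 k = (e 1 k + Aa n i k + e n.+1 k)%N.
Proof.
move=> hi; rewrite /s /Aa; case: ifP => h //.
have -> : (i.+1 == n) = true by apply/eqP; lia.
by rewrite addn0.
Qed.

Lemma Sv n j k : (0 < n)%N -> (j < n)%N -> s n (j + n).+1 k = (Aa n j k + e n.+1 k)%N.
Proof.
move=> hn hj; rewrite /s /Aa.
have -> : ((j + n).+1 < n)%N = false by apply/negbTE; rewrite -leqNgt; lia.
have -> : ((j + n).+1 == n) = false by apply/negbTE/eqP; lia.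
case: (ltnP j.+1 n) => h.
  have -> : ((j + n).+1 < 2 * n)%N = true by apply/idP; lia.
  by have -> : ((j + n).+2 - n = j.+2)%N by lia.
have -> : ((j + n).+1 < 2 * n)%N = false by apply/negbTE; rewrite -leqNgt; lia.
by [].
Qed.

Lemma Sswap n i j k : (0 < n)%N -> (i < n)%N -> (j < n)%N ->
  (s n i.+1 k + s n (j + n).+1 k = s n j.+1 k + s n (i + n).+1 k)%N.
Proof.
move=> hn hi hj; rewrite !Sv // !Su //.
move: (e 1 k) (e n.+1 k) (Aa n i k) (Aa n j k) => x y z w; lia.
Qed.

Lemma in_iota0 c n : (c \in iota 0 (n - 0)) = (c < n)%N.
Proof. by rewrite mem_iota add0n subn0. Qed.

Lemma coord0 n (m : 'X_{1..2 * n}) : (0 < n)%N ->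
  nm (phi m) 0 = (\sum_(0 <= c < n) nm m c)%N.
Proof.
move=> hn; rewrite nm_phi // (split2 m (fun i => s n i.+1 _)).
rewrite [X in (_ + X)%N]big1_seq ?addn0; last first.
  by move=> c /andP[_]; rewrite in_iota0 => h; rewrite S0v.
by apply: eq_big_seq => c; rewrite in_iota0 => h; rewrite S0u // mul1n.
Qed.

Lemma coordc n (m : 'X_{1..2 * n}) c0 : (c0.+1 < n)%N ->
  nm (phi m) c0.+1 = (nm m c0 + nm m (c0 + n))%N.
Proof.
move=> hc; rewrite nm_phi; last by lia.
rewrite (split2 m (fun i => s n i.+1 _)).
rewrite (eq_big_seq (fun c => (c == c0) * nm m c)%N); last first.
  by move=> c; rewrite in_iota0 => h; rewrite Scu.
rewrite [X in (_ + X)%N](eq_big_seq (fun c => (c == c0) * nm m (c + n))%N); last first.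
  by move=> c; rewrite in_iota0 => h; rewrite Scv.
rewrite (sum_pick (fun c => nm m c)) //; last by lia.
by rewrite (sum_pick (fun c => nm m (c + n))) //; lia.
Qed.

Lemma coordn n (m : 'X_{1..2 * n}) : (0 < n)%N ->
  nm (phi m) n = (\sum_(0 <= c < n) (nm m c + nm m (c + n)))%N.
Proof.
move=> hn; rewrite nm_phi // (split2 m (fun i => s n i.+1 _)) big_split /=.
congr (_ + _)%N; apply: eq_big_seq => c; rewrite in_iota0 => h.
  by rewrite Snu // mul1n.
by rewrite Snv // mul1n.
Qed.

Lemma col_eq n (m m' : 'X_{1..2 * n}) c : (0 < n)%N -> phi m = phi m' -> (c < n)%N ->
  (nm m c + nm m (c + n) = nm m' c + nm m' (c + n))%N.
Proof.
move=> hn he hc; case: (ltnP c.+1 n) => hc1.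
  by rewrite -!coordc // he.
have := coordn m hn; rewrite he coordn // => E.
move: E; rewrite (bigD1_seq c) ?iota_uniq ?in_iota0 //= (bigD1_seq c (r := index_iota 0 n)) ?iota_uniq ?in_iota0 //=.
have E2 : (\sum_(0 <= i < n | i != c) (nm m i + nm m (i + n)) =
   \sum_(0 <= i < n | i != c) (nm m' i + nm m' (i + n)))%N.
  rewrite big_seq_cond [RHS]big_seq_cond; apply: eq_bigr => i /andP[hi hne].
  rewrite in_iota0 in hi.
  by rewrite -!coordc -?he //; lia.
by rewrite E2; lia.
Qed.

Lemma row_eq n (m m' : 'X_{1..2 * n}) : (0 < n)%N -> phi m = phi m' ->
  (\sum_(0 <= c < n) nm m c = \sum_(0 <= c < n) nm m' c)%N.
Proof. by move=> hn he; rewrite -!coord0 // he. Qed.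

Lemma m_eq n (m m' : 'X_{1..2 * n}) :
  (forall c, (c < n)%N -> nm m c = nm m' c) ->
  (forall c, (c < n)%N -> nm m (c + n) = nm m' (c + n)) -> m = m'.
Proof.
move=> h1 h2; apply: nm_eqP => k hk; case: (ltnP k n) => hkn; first exact: h1.
have -> : k = ((k - n) + n)%N by lia.
apply: h2; lia.
Qed.

Lemma sum_lt n (f g : nat -> nat) i0 : (forall c, (c < n)%N -> (f c <= g c)%N) ->
  (i0 < n)%N -> (f i0 < g i0)%N ->
  (\sum_(0 <= c < n) f c < \sum_(0 <= c < n) g c)%N.
Proof.
move=> hle hi hlt.
rewrite (bigD1_seq i0) ?iota_uniq ?in_iota0 //= [X in (_ < X)%N](bigD1_seq i0) ?iota_uniq ?in_iota0 //=.
have : (\sum_(0 <= c < n | c != i0) f c <= \sum_(0 <= c < n | c != i0) g c)%N.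
  rewrite big_seq_cond [X in (_ <= X)%N]big_seq_cond; apply: leq_sum => c /andP[hc _].
  by rewrite in_iota0 in hc; apply: hle.
lia.
Qed.

Lemma find_ij n (m m' : 'X_{1..2 * n}) : (0 < n)%N -> phi m = phi m' -> m != m' ->
  exists i j, [/\ (i < n)%N, (j < n)%N, (nm m' i < nm m i)%N & (nm m j < nm m' j)%N].
Proof.
move=> hn he hne.
have [i0 hi0 hne0] : exists2 i0, (i0 < n)%N & nm m i0 != nm m' i0.
  case: (boolP (has (fun c => nm m c != nm m' c) (iota 0 n))).
    by case/hasP => c; rewrite mem_iota add0n => /andP[_ hc] h; exists c.
  move/hasPn => H; case/eqP: hne; apply: m_eq => c hc.
    by have := H c; rewrite mem_iota add0n hc => /(_ isT) /negPn /eqP.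
  have := H c; rewrite mem_iota add0n hc => /(_ isT) /negPn /eqP => E.
  have := col_eq hn he hc; lia.
have hr := row_eq hn he.
case: (ltngtP (nm m' i0) (nm m i0)) => h; last by rewrite h eqxx in hne0.
- case: (boolP (has (fun c => nm m c < nm m' c)%N (iota 0 n))).
    case/hasP => c; rewrite mem_iota add0n => /andP[_ hc] h'.
    by exists i0, c.
  move/hasPn => H; exfalso.
  have : (\sum_(0 <= c < n) nm m' c < \sum_(0 <= c < n) nm m c)%N.
    apply: sum_lt h => // c hc; have := H c; rewrite mem_iota add0n hc => /(_ isT); lia.
  lia.
- case: (boolP (has (fun c => nm m' c < nm m c)%N (iota 0 n))).
    case/hasP => c; rewrite mem_iota add0n => /andP[_ hc] h'.
    by exists c, i0.
  move/hasPn => H; exfalso.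
  have : (\sum_(0 <= c < n) nm m c < \sum_(0 <= c < n) nm m' c)%N.
    apply: sum_lt h => // c hc; have := H c; rewrite mem_iota add0n hc => /(_ isT); lia.
  lia.
Qed.

Definition uvf n (c d k : nat) : nat := ((k == c) + (k == d + n))%N.
Definition uv n (c d : nat) : 'X_{1..2 * n} := [multinom uvf n c d i | i < 2 * n].

Lemma nm_uv n c d k : nm (uv n c d) k = if (k < 2 * n)%N then uvf n c d k else 0%N.
Proof. exact: nmE. Qed.

Lemma phiD n (m1 m2 : 'X_{1..2 * n}) : phi (m1 + m2)%MM = (phi m1 + phi m2)%MM.
Proof.
apply/mnmP => i; rewrite mnmDE /phi !mnm_sumE -big_split /=.
by apply: eq_bigr => j _; rewrite !mulmnE mnmDE mulnDr.
Qed.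

Lemma nm_phi_uv n c d k : (0 < n)%N -> (c < n)%N -> (d < n)%N -> (k < n.+1)%N ->
  nm (phi (uv n c d)) k = (s n c.+1 k.+1 + s n (d + n).+1 k.+1)%N.
Proof.
move=> hn hc hd hk; rewrite nm_phi // (split2 _ (fun i => s n i.+1 _)).
rewrite (eq_big_seq (fun c' => (c' == c) * s n c'.+1 k.+1)%N); last first.
  move=> c'; rewrite in_iota0 => h; rewrite nm_uv /uvf.
  by case: ifP => ?; repeat (case: eqP => ?); simpl; lia.
rewrite [X in (_ + X)%N](eq_big_seq (fun c' => (c' == d) * s n (c' + n).+1 k.+1)%N); last first.
  move=> c'; rewrite in_iota0 => h; rewrite nm_uv /uvf.
  by case: ifP => ?; repeat (case: eqP => ?); simpl; lia.
by rewrite (sum_pick (fun c' => s n c'.+1 k.+1)) // (sum_pick (fun c' => s n (c' + n).+1 k.+1)).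
Qed.

Lemma phi_swap n c d : (0 < n)%N -> (c < n)%N -> (d < n)%N ->
  phi (uv n c d) = phi (uv n d c).
Proof.
move=> hn hc hd; apply: nm_eqP => k hk; rewrite !nm_phi_uv //.
exact: Sswap.
Qed.

Definition Dm n (m m' : 'X_{1..2 * n}) : nat :=
  (\sum_(0 <= c < n) (nm m c - nm m' c) + \sum_(0 <= c < n) (nm m (c + n) - nm m' (c + n)))%N.

Lemma key n (le : rel 'X_{1..2 * n}) (hn : (0 < n)%N) (Hmo : monomial_order le)
  (m : 'X_{1..2 * n})
  (H : forall c d, (c < n)%N -> (d < n)%N -> c != d -> (0 < nm m c)%N ->
        (0 < nm m (d + n))%N -> le (uv n c d) (uv n d c)) :
  forall m', phi m' = phi m -> le m m'.
Proof.
case: Hmo => [[hrefl hanti htrans htot] [hzero hcomp]].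
move=> m'; have [N hN] : exists N, (Dm m m' < N)%N by exists (Dm m m').+1.
elim: N m' hN => [|N IH] m' hD he; first by rewrite ltn0 in hD.
case: (eqVneq m m') => [<- | hne]; first exact: hrefl.
have [i [j [hi hj hi1 hj1]]] := find_ij hn (esym he) hne.
have ci := col_eq hn (esym he) hi.
have cj := col_eq hn (esym he) hj.
have hij : i != j by apply/eqP => E; subst j; lia.
have p1 : (0 < nm m i)%N by lia.
have p2 : (0 < nm m (j + n))%N by lia.
have hle := H i j hi hj hij p1 p2.
set w := uv n j i.
have hw : (w <= m')%MM.
  apply: nm_leP => k hk; rewrite nm_uv hk /uvf.
  by repeat (case: eqP => ?); subst; simpl; lia.
set m'' := (uv n i j + (m' - w))%MM.
have e1 : m' = (w + (m' - w))%MM by rewrite addmC submK.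
have hphi : phi m'' = phi m.
  by rewrite /m'' phiD phi_swap // -phiD -e1.
have f1 : forall c, (c < n)%N -> nm m'' c = ((c == i) + (nm m' c - (c == j)))%N.
  move=> c hc; rewrite /m'' nmD nmB !nm_uv /uvf.
  have -> : (c < 2 * n)%N by lia.
  by repeat (case: eqP => ?); simpl; lia.
have f2 : forall c, (c < n)%N -> nm m'' (c + n) = ((c == j) + (nm m' (c + n) - (c == i)))%N.
  move=> c hc; rewrite /m'' nmD nmB !nm_uv /uvf.
  have -> : (c + n < 2 * n)%N by lia.
  by repeat (case: eqP => ?); simpl; lia.
have hlt : (Dm m m'' < Dm m m')%N.
  rewrite /Dm.
  have A1 : (\sum_(0 <= c < n) (nm m c - nm m'' c) < \sum_(0 <= c < n) (nm m c - nm m' c))%N.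
    apply: (sum_lt (i0 := i)) => //.
      move=> c hc; rewrite f1 //.
      by repeat (case: eqP => ?); subst; simpl; lia.
    by rewrite f1 // eqxx; case: eqP => ?; simpl; lia.
  have A2 : (\sum_(0 <= c < n) (nm m (c + n) - nm m'' (c + n)) <=
             \sum_(0 <= c < n) (nm m (c + n) - nm m' (c + n)))%N.
    rewrite big_seq [X in (_ <= X)%N]big_seq; apply: leq_sum => c.
    rewrite in_iota0 => hc; rewrite f2 //.
    by repeat (case: eqP => ?); subst; simpl; lia.
  lia.
have IHm := IH m'' ltac:(lia) hphi.
have hle2 : le m'' m'.
  rewrite [X in le _ X]e1 /m''; exact: hcomp.
exact: htrans IHm hle2.
Qed.

Lemma compX' (K : fieldType) n (m : 'X_{1..2 * n}) :
  'X_[m] \mPo toric_map K n = 'X_[phi m].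
Proof. exact: compX. Qed.

Lemma tt_uv (K : fieldType) n i j : (0 < i)%N -> (0 < j)%N ->
  t K n i * t K n (n + j) = 'X_[uv n i.-1 j.-1].
Proof.
move=> hi hj; rewrite /t -mpolyXD; congr 'X_[_].
apply/mnmP => x; rewrite mnmDE !mnmE /uvf.
by repeat (case: eqP => ?); simpl; lia.
Qed.

Lemma exists_max (T : eqType) (le : rel T) (s : seq T) :
  reflexive le -> transitive le -> total le -> s != [::] ->
  exists2 x, x \in s & all (fun y => le y x) s.
Proof.
move=> hr ht hto; elim: s => [|a s IH] // _.
case: (eqVneq s [::]) => [-> | hs].
  by exists a; rewrite ?mem_seq1 //= hr.
have [x hx hall] := IH hs.
case/orP: (hto a x) => hax.
  exists x; first by rewrite in_cons hx orbT.
  by rewrite /= hax.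
exists a; first by rewrite in_cons eqxx.
rewrite /= hr /=; apply/allP => y hy.
exact: ht (allP hall y hy) hax.
Qed.

Lemma binom_lead (K : fieldType) p (le : rel 'X_{1..p}) (m1 m2 : 'X_{1..p}) :
  reflexive le -> m1 != m2 -> le m2 m1 ->
  [/\ is_lead_mono le ('X_[m1] - 'X_[m2] : {mpoly K[p]}) m1,
      is_lead_mono le ('X_[m2] - 'X_[m1] : {mpoly K[p]}) m1,
      ('X_[m1] - 'X_[m2] : {mpoly K[p]}) != 0 &
      ('X_[m2] - 'X_[m1] : {mpoly K[p]}) != 0].
Proof.
move=> hr hne hle.
have c1 : ('X_[m1] - 'X_[m2] : {mpoly K[p]})@_m1 = 1.
  by rewrite mcoeffB !mcoeffX eqxx eq_sym (negbTE hne) subr0.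
have c2 : ('X_[m2] - 'X_[m1] : {mpoly K[p]})@_m1 = -1.
  by rewrite mcoeffB !mcoeffX eqxx eq_sym (negbTE hne) sub0r.
have al : forall q : {mpoly K[p]}, (forall m, m != m1 -> m != m2 -> q@_m = 0) ->
    all (fun y => le y m1) (msupp q).
  move=> q hq; apply/allP => y; rewrite mcoeff_msupp => hy.
  case: (eqVneq y m1) => [-> //|h1]; case: (eqVneq y m2) => [-> //|h2].
  by rewrite hq // eqxx in hy.
split.
- rewrite /is_lead_mono mcoeff_msupp c1 oner_neq0 /=; apply: al => m h1 h2.
  have /negbTE e1 : m1 != m by rewrite eq_sym.
  have /negbTE e2 : m2 != m by rewrite eq_sym.
  by rewrite mcoeffB !mcoeffX e1 e2 subrr.
- rewrite /is_lead_mono mcoeff_msupp c2 oppr_eq0 oner_neq0 /=; apply: al => m h1 h2.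
  have /negbTE e1 : m1 != m by rewrite eq_sym.
  have /negbTE e2 : m2 != m by rewrite eq_sym.
  by rewrite mcoeffB !mcoeffX e1 e2 subrr.
- by apply/eqP => h; move: c1; rewrite h mcoeff0 => /eqP; rewrite eq_sym oner_eq0.
- by apply/eqP => h; move: c2; rewrite h mcoeff0 => /eqP; rewrite eq_sym oppr_eq0 oner_eq0.
Qed.

Lemma uv_neq n c d : (c < n)%N -> (d < n)%N -> c != d -> uv n c d != uv n d c.
Proof.
move=> hc hd hcd; apply/eqP => E; have := congr1 (fun m => nm m c) E.
rewrite /= !nm_uv /uvf; have -> : (c < 2 * n)%N by lia.
move/eqP: hcd => hcd.
by repeat (case: eqP => ?); simpl; lia.
Qed.

Lemma uv_le n (m : 'X_{1..2 * n}) c d : (c < n)%N -> (d < n)%N ->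
  (0 < nm m c)%N -> (0 < nm m (d + n))%N -> (uv n c d <= m)%MM.
Proof.
move=> hc hd h1 h2; apply: nm_leP => k hk; rewrite nm_uv hk /uvf.
by repeat (case: eqP => ?); subst; simpl; lia.
Qed.

Theorem mainTheorem2 (K : fieldType) (n : nat) (hn : (1 <= n)%N) :
  universal_groebner_basis (@toric_ideal K n) (@U K n).
Proof.
move=> le Hmo; have Hmo' := Hmo.
case: Hmo' => [[hrefl hanti htrans htot] [hzero hcomp]].
split.
  move=> g [i [j [hi hij hjn ->]]].
  rewrite /toric_ideal !tt_uv; try lia.
  by rewrite comp_mpolyB !compX' phi_swap ?subrr //; lia.
move=> f hf f0.
have [mf hmf hall] : exists2 x, x \in msupp f & all (fun y => le y x) (msupp f).
  by apply: exists_max => //; rewrite msupp_eq0.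
have hlead : is_lead_mono le f mf by rewrite /is_lead_mono hmf hall.
case: (boolP [forall c : 'I_n, forall d : 'I_n, ((c : nat) != d) && (0 < nm mf c)%N
     && (0 < nm mf (d + n))%N ==> le (uv n c d) (uv n d c)]).
  move=> hH; exfalso.
  have H : forall c d, (c < n)%N -> (d < n)%N -> c != d -> (0 < nm mf c)%N ->
        (0 < nm mf (d + n))%N -> le (uv n c d) (uv n d c).
    move=> c d hc hd hcd h1 h2.
    move/forallP: hH => /(_ (Ordinal hc)) /forallP /(_ (Ordinal hd)) /implyP; apply.
    by rewrite /= hcd h1 h2.
  have kk := key hn Hmo H.
  have := congr1 (mcoeff (phi mf)) hf.
  rewrite comp_mpolyEX raddf_sum mcoeff0 /=.
  rewrite (bigD1_seq mf) ?msupp_uniq //= big1_seq.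
    rewrite mcoeffZ compX' mcoeffX eqxx mulr1 addr0 => /eqP.
    by move=> h; move: hmf; rewrite mcoeff_msupp h.
  move=> m /andP[hne hm].
  rewrite mcoeffZ compX' mcoeffX.
  case: eqP => [E|]; last by rewrite mulr0.
  have h1 := kk m E.
  have h2 := allP hall m hm.
  by rewrite (hanti m mf) ?h1 ?h2 ?eqxx in hne.
rewrite negb_forall => /existsP [c]; rewrite negb_forall => /existsP [d].
rewrite negb_imply => /andP [/andP [/andP [hcd hc0] hd0] hnle].
have hle : le (uv n d c) (uv n c d).
  by case/orP: (htot (uv n c d) (uv n d c)) => // h; rewrite h in hnle.
have hneq := uv_neq (ltn_ord c) (ltn_ord d) hcd.
have [L1 L2 N1 N2] := binom_lead K hrefl hneq hle.
have hmg : (uv n c d <= mf)%MM by apply: uv_le.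
case: (ltngtP c d) => hcd'.
- exists ('X_[uv n c d] - 'X_[uv n d c]); split; [ | exact: N1 | ].
    exists (c.+1), (d.+1); split; [done | exact: hcd' | exact: ltn_ord d | ].
    by rewrite !tt_uv.
  by exists mf, (uv n c d); split; [exact: hlead | exact: L1 | exact: hmg].
- exists ('X_[uv n d c] - 'X_[uv n c d]); split; [ | exact: N2 | ].
    exists (d.+1), (c.+1); split; [done | exact: hcd' | exact: ltn_ord c | ].
    by rewrite !tt_uv.
  by exists mf, (uv n c d); split; [exact: hlead | exact: L2 | exact: hmg].
- by move/eqP: hcd'; rewrite (negbTE hcd).
Qed.
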